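(* Let $n=2N$ or $n=2N+1$ and let $V=\mathbb{C}^n$ with basis $e_{\pm1},\dots,e_{\pm N}$ (together with an extra basis vector $e_0$ when $n=2N+1$), equipped with the nondegenerate symmetric bilinear form $B$ given by $B(e_\alpha,e_{-\alpha})=1$ for $\alpha=1,\dots,N$, $B(e_0,e_0)=1$ (when $n$ is odd), and all other pairings of basis vectors equal to $0$. Let $O(n)$ be the orthogonal group of $B$, let $\mathfrak h$ be the Cartan subalgebra of $\mathfrak{so}(n)$ consisting of the operators acting by $x_\alpha$ on $e_\alpha$, by $-x_\alpha$ on $e_{-\alpha}$ ($\alpha=1,\dots,N$) and by $0$ on $e_0$, and let $\mathrm N_{O(n)}(\mathfrak h)=\{g\in O(n): g\mathfrak h g^{-1}=\mathfrak h\}$. For a subset $\{a_1,\dots,a_l\}\subseteq\{1,\dots,N\}$ of $l$ distinct indices (read cyclically, $a_{l+1}=a_1$) and $\lambda\in\mathbb C^\times$, define: - $[l,\lambda]_+$ to be the operator with $e_{-a_i}\mapsto e^{i\pi(l-1)/l}\lambda\, e_{-a_{i+1}}$ and $e_{a_i}\mapsto e^{-i\pi(l-1)/l}\lambda^{-1}\, e_{a_{i+1}}$ for $i=1,\dots,l$, and identity on all other basis vectors; - $[l]_-$ to be the operator with $e_{a_1}\mapsto e_{a_2}\mapsto\dots\mapsto e_{a_l}\mapsto e_{-a_1}\mapsto e_{-a_2}\mapsto\dots\mapsto e_{-a_l}\mapsto e_{a_1}$, and identity on all other basis vectors; - for $n$ odd and $\epsilon\in\{\pm1\}$, $[\epsilon]$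 to be the operator $e_0\mapsto\epsilon e_0$, identity on all other basis vectors. Then every $g\in \mathrm N_{O(2N)}(\mathfrak h)$ is conjugate in $\mathrm N_{O(2N)}(\mathfrak h)$ to a product $\prod_{j=1}^K[l_j,\lambda_j]_+\cdot\prod_{j=1}^{K'}[l'_j]_-$ of such operators supported on pairwise disjoint index sets which together partition $\{1,\dots,N\}$ (so $\sum_j l_j+\sum_j l'_j=N$), for some $K,K'\ge0$, lengths $l_j,l'_j\ge1$ and $\lambda_j\in\mathbb C^\times$; and every $g\in \mathrm N_{O(2N+1)}(\mathfrak h)$ is conjugate in $\mathrm N_{O(2N+1)}(\mathfrak h)$ to a product $[\epsilon]\cdot\prod_{j=1}^K[l_j,\lambda_j]_+\cdot\prod_{j=1}^{K'}[l'_j]_-$ of the same form with some $\epsilon\in\{\pm1\}$.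
   Context: $\mathrm N_{O(2N)}(\mathfrak h)\cong S_N\ltimes(\mathbb Z/2\mathbb Z)^N\ltimes(\mathbb C^\times)^N$, where $S_N$ permutes the indices simultaneously on $e_\alpha$ and $e_{-\alpha}$, the $\alpha$-th factor $\mathbb Z/2\mathbb Z$ swaps $e_\alpha\leftrightarrow e_{-\alpha}$, and $(\lambda_\alpha)\in(\mathbb C^\times)^N$ acts by $e_\alpha\mapsto\lambda_\alpha e_\alpha$, $e_{-\alpha}\mapsto\lambda_\alpha^{-1}e_{-\alpha}$; and $\mathrm N_{O(2N+1)}(\mathfrak h)=\mathrm N_{O(2N)}(\mathfrak h)\times\mathbb Z/2\mathbb Z$, the last factor acting by $e_0\mapsto -e_0$. *)

(* Defs.v *)
From HB Require Import structures.
From mathcomp Require Import all_boot all_order all_algebra.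
From mathcomp Require Import complex zify.
From mathcomp Require Import reals trigo.
Set Implicit Arguments. Unset Strict Implicit. Unset Printing Implicit Defensive.
Import Order.TTheory GRing.Theory Num.Theory.
Local Open Scope ring_scope.

(* Basis of V = C^n, n = 2N + k (k = false : n = 2N, k = true : n = 2N+1).
   Index conventions (0-based, alpha in 'I_N stands for the paper's alpha+1):
     e_{alpha}   is index alpha,
     e_{-alpha}  is index N + alpha,
     e_0         is index 2N (only when k = true). *)
Definition dimV (N : nat) (k : bool) : nat := (N + N + k)%N.

Lemma ep_proof N k (a : 'I_N) : (a < dimV N k)%N.
Proof. rewrite /dimV; have := ltn_ord a; lia. Qed.
Lemma em_proof N k (a : 'I_N) : (N + a < dimV N k)%N.
Proof. rewrite /dimV; have := ltn_ord a; lia. Qed.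

Definition ep N k (a : 'I_N) : 'I_(dimV N k) := Ordinal (ep_proof k a).
Definition em N k (a : 'I_N) : 'I_(dimV N k) := Ordinal (em_proof k a).

Section Ops.
Variable C : fieldType.
Variables (N : nat) (k : bool).
Local Notation n := (dimV N k).

Definition Bmx : 'M[C]_n :=
  \sum_(a < N) (delta_mx (ep k a) (em k a) + delta_mx (em k a) (ep k a))
  + \sum_(j : 'I_n | (N + N <= j)%N) delta_mx j j.

Definition orthogonal (g : 'M[C]_n) : Prop := g^T *m Bmx *m g = Bmx.

Definition cartan (x : 'I_N -> C) : 'M[C]_n :=
  \sum_(a < N) (x a *: delta_mx (ep k a) (ep k a) - x a *: delta_mx (em k a) (em k a)).

Definition in_normalizer (g : 'M[C]_n) : Prop :=
  orthogonal g /\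
  (forall x, exists y, g *m cartan x *m invmx g = cartan y) /\
  (forall y, exists x, g *m cartan x *m invmx g = cartan y).

(* the cyclic shift e_{s_1} -> c e_{s_2} -> ... -> c e_{s_m} -> c e_{s_1} *)
Definition cyc_part (s : seq 'I_n) (c : C) : 'M[C]_n :=
  \sum_(p <- zip s (rot 1 s)) c *: delta_mx p.2 p.1.

Definition id_off (s : seq 'I_n) : 'M[C]_n :=
  \sum_(j : 'I_n | j \notin s) delta_mx j j.

(* [l, lambda]_+ on the cyclically ordered indices a = [a_1; ...; a_l],
   with z = e^{i pi (l-1)/l} supplied as a parameter:
   e_{-a_i} -> z lambda e_{-a_{i+1}},  e_{a_i} -> z^{-1} lambda^{-1} e_{a_{i+1}} *)
Definition plus_op (z : C) (a : seq 'I_N) (lam : C) : 'M[C]_n :=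
  cyc_part [seq em k x | x <- a] (z * lam)
  + cyc_part [seq ep k x | x <- a] (z^-1 * lam^-1)
  + id_off ([seq ep k x | x <- a] ++ [seq em k x | x <- a]).

Definition minus_op (a : seq 'I_N) : 'M[C]_n :=
  cyc_part ([seq ep k x | x <- a] ++ [seq em k x | x <- a]) 1
  + id_off ([seq ep k x | x <- a] ++ [seq em k x | x <- a]).

Definition eps_op (eps : C) : 'M[C]_n :=
  \sum_(j : 'I_n | (j < N + N)%N) delta_mx j j
  + \sum_(j : 'I_n | (N + N <= j)%N) eps *: delta_mx j j.

End Ops.

Definition zeta (R : realType) (l : nat) : R[i] :=
  (cos (pi * (l%:R - 1) / l%:R) +i* sin (pi * (l%:R - 1) / l%:R))%C.

Definition normal_form (R : realType) (N : nat) (k : bool)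
  (ps : seq (seq 'I_N * R[i])) (ms : seq (seq 'I_N)) : 'M[R[i]]_(dimV N k) :=
  (\prod_(p <- ps) @plus_op _ N k (zeta R (size p.1)) p.1 p.2)
  * (\prod_(a <- ms) @minus_op _ N k a).

Definition admissible (R : realType) (N : nat)
  (ps : seq (seq 'I_N * R[i])) (ms : seq (seq 'I_N)) : Prop :=
  all (fun p => 0 < size p.1)%N ps /\ all (fun a => 0 < size a)%N ms /\
  all (fun p => p.2 != 0) ps /\
  perm_eq (flatten ([seq p.1 | p <- ps] ++ ms)) (enum 'I_N).

(* Main.v *)
Require Import Defs.
From HB Require Import structures.
From mathcomp Require Import all_boot all_order all_fingroup all_algebra.
From mathcomp Require Import complex zify ring.
From mathcomp Require Import reals trigo.
Set Implicit Arguments. Unset Strict Implicit. Unset Printing Implicit Defensive.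
Import Order.TTheory GRing.Theory Num.Theory.
Local Open Scope ring_scope.

Section Idx.
Variables (N : nat) (k : bool).
Local Notation n := (dimV N k).

Lemma ep_val (a : 'I_N) : val (ep k a) = val a. Proof. by []. Qed.
Lemma em_val (a : 'I_N) : val (em k a) = (N + a)%N. Proof. by []. Qed.

Lemma ep_inj : injective (@ep N k).
Proof. by move=> a b /(congr1 val) /= /val_inj. Qed.
Lemma em_inj : injective (@em N k).
Proof. by move=> a b /(congr1 val) /= /addnI /val_inj. Qed.
Lemma ep_em (a b : 'I_N) : (ep k a == em k b) = false.
Proof. apply/negbTE/eqP => /(congr1 val) /=; have := ltn_ord a; lia. Qed.
Lemma em_ep (a b : 'I_N) : (em k a == ep k b) = false.
Proof. by rewrite eq_sym ep_em. Qed.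

Variant idx_spec : 'I_n -> Type :=
| IdxEp a : idx_spec (ep k a)
| IdxEm a : idx_spec (em k a)
| IdxE0 (j : 'I_n) of (N + N <= j)%N : idx_spec j.

Lemma idxP j : idx_spec j.
Proof.
case: (ltnP j N) => h1.
  have -> : j = ep k (Ordinal h1) by apply: val_inj.
  by constructor.
case: (ltnP j (N + N)) => h2; last by constructor.
have h3 : (j - N < N)%N by lia.
have -> : j = em k (Ordinal h3) by apply: val_inj => /=; lia.
by constructor.
Qed.

Definition dec (j : 'I_n) : option (bool * 'I_N) :=
  match @insub _ (fun m => m < N)%N _ (val j) with
  | Some a => Some (false, a)
  | None => match @insub _ (fun m => m < N)%N _ (val j - N)%N with
            | Some a => Some (true, a) | None => None end
  end.

Definition mkfun (X : Type) (fp fm : 'I_N -> X) (f0 : 'I_n -> X) (j : 'I_n) : X :=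
  match dec j with
  | Some (false, a) => fp a | Some (true, a) => fm a | None => f0 j end.

Lemma mkfun_ep X fp fm f0 a : @mkfun X fp fm f0 (ep k a) = fp a.
Proof. rewrite /mkfun /dec /= insubT; first exact: ltn_ord. by move=> h /=; congr fp; apply: val_inj. Qed.
Lemma mkfun_em X fp fm f0 a : @mkfun X fp fm f0 (em k a) = fm a.
Proof.
rewrite /mkfun /dec /= insubF /=; last by rewrite ltnNge leq_addr.
have h : (N + a - N < N)%N by rewrite addKn.
rewrite insubT /=; congr fm; apply: val_inj => /=; by rewrite addKn.
Qed.
Lemma mkfun_e0 X fp fm f0 (j : 'I_n) : (N + N <= j)%N -> @mkfun X fp fm f0 j = f0 j.
Proof.
move=> hj; have hv : \val j = nat_of_ord j by [].
rewrite /mkfun /dec hv; have hn := ltn_ord j.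
move: (nat_of_ord j) hn hj => m; rewrite /dimV => hn hj.
have hb : (nat_of_bool k <= 1)%N by case: k.
rewrite insubF; last by apply/negbTE; rewrite -leqNgt; lia.
by rewrite insubF //; apply/negbTE; rewrite -leqNgt; lia.
Qed.

Lemma e0_uniq (i j : 'I_n) : (N + N <= i)%N -> (N + N <= j)%N -> i = j.
Proof.
move=> hi hj; apply: ord_inj; have := ltn_ord i; have := ltn_ord j.
have hb : (nat_of_bool k <= 1)%N by case: k.
move: hi hj; rewrite /dimV /=; lia.
Qed.

Definition idx (b : bool) (a : 'I_N) : 'I_n := if b then em k a else ep k a.

Definition swp : 'I_n -> 'I_n := mkfun (fun a => em k a) (fun a => ep k a) id.

Lemma swp_ep a : swp (ep k a) = em k a. Proof. exact: mkfun_ep. Qed.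
Lemma swp_em a : swp (em k a) = ep k a. Proof. exact: mkfun_em. Qed.
Lemma swp_e0 (j : 'I_n) : (N + N <= j)%N -> swp j = j. Proof. exact: mkfun_e0. Qed.
Lemma swpK : involutive swp.
Proof. by move=> j; case: (idxP j) => [a|a|j' h]; rewrite ?swp_ep ?swp_em ?swp_em ?swp_ep ?swp_e0. Qed.
Lemma swp_idx b a : swp (idx b a) = idx (~~ b) a.
Proof. by case: b; rewrite /= ?swp_ep ?swp_em. Qed.
Lemma swp_fix (j : 'I_n) : swp j = j -> (N + N <= j)%N.
Proof.
case: (idxP j) => [a|a|j' h] //; rewrite ?swp_ep ?swp_em => /eqP;
  by rewrite ?ep_em ?em_ep.
Qed.

End Idx.

Section Mono.
Variable C : fieldType.
Variables (N : nat) (k : bool).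
Local Notation n := (dimV N k).
Local Notation ep := (@ep N k).
Local Notation em := (@em N k).
Local Notation swp := (@swp N k).

Definition mono (s : 'I_n -> 'I_n) (c : 'I_n -> C) : 'M[C]_n :=
  \matrix_(i, j) (if i == s j then c j else 0).

Lemma monoE s c i j : mono s c i j = if i == s j then c j else 0.
Proof. by rewrite mxE. Qed.

Lemma mono_ext s c t d : s =1 t -> c =1 d -> mono s c = mono t d.
Proof. by move=> hs hc; apply/matrixP => i j; rewrite !monoE hs hc. Qed.

Lemma mono_coef s c d : mono s c = mono s d -> c =1 d.
Proof. by move=> /matrixP h j; have := h (s j) j; rewrite !monoE eqxx. Qed.

Lemma mono_mul s c t d :
  mono s c *m mono t d = mono (s \o t) (fun j => c (t j) * d j).
Proof.
apply/matrixP => i j; rewrite !mxE (bigD1 (t j)) //= big1 ?addr0.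
  by rewrite !mxE eqxx; case: eqP => _; rewrite ?mul0r.
by move=> m hm; rewrite !mxE (negbTE hm) mulr0.
Qed.

Lemma mono1 : mono id (fun _ => 1) = 1%:M.
Proof. by apply/matrixP => i j; rewrite !mxE; case: eqP. Qed.

Lemma trmx_mono (s : {perm 'I_n}) c :
  (mono s c)^T = mono (s^-1)%g (fun j => c ((s^-1)%g j)).
Proof.
apply/matrixP => i j; rewrite !mxE; apply/esym.
have -> : (i == (s^-1)%g j) = (j == s i).
  apply/eqP/eqP => [->|->]; by rewrite ?permKV ?permK.
by case: eqP => [->|//]; rewrite permK.
Qed.

Lemma mono_unit (s : {perm 'I_n}) c :
  (forall j, c j != 0) ->
  mono s c *m mono (s^-1)%g (fun j => (c ((s^-1)%g j))^-1) = 1%:M.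
Proof.
move=> hc; rewrite mono_mul -mono1; apply: mono_ext => j /=.
  by rewrite permKV.
by rewrite mulfV.
Qed.

Lemma ep_e0 (j : 'I_n) a : (N + N <= j)%N -> (j == ep a) = false.
Proof. move=> h; apply/negbTE/eqP => /(congr1 val) /=; have := ltn_ord a; lia. Qed.
Lemma em_e0 (j : 'I_n) a : (N + N <= j)%N -> (j == em a) = false.
Proof. move=> h; apply/negbTE/eqP => /(congr1 val) /=; have := ltn_ord a; lia. Qed.

Lemma sum_one (I : finType) (F : I -> C) b :
  (forall a, a != b -> F a = 0) -> \sum_a F a = F b.
Proof. by move=> h; rewrite (bigD1 b) //= big1 ?addr0. Qed.

Definition wfun (x : 'I_N -> C) : 'I_n -> C := mkfun x (fun a => - x a) (fun _ => 0).

Lemma epE a b : (ep a == ep b) = (a == b).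
Proof. by apply/eqP/eqP => [/ep_inj|->]. Qed.
Lemma emE a b : (em a == em b) = (a == b).
Proof. by apply/eqP/eqP => [/em_inj|->]. Qed.

Ltac simpI := rewrite ?epE ?emE ?ep_em ?em_ep ?eqxx ?andbT ?andbF ?mulr0 ?mulr1 ?subr0 ?sub0r ?addr0 ?add0r ?oppr0.

Lemma cartan_mono x : cartan k x = mono id (wfun x).
Proof.
apply/matrixP => i j; rewrite summxE monoE /wfun.
case: (idxP j) => [b|b|j' hj].
- rewrite mkfun_ep (sum_one (b:=b)) => [|a hab]; rewrite !mxE; simpI.
    by case: (i == _); simpI.
  by rewrite [b == a]eq_sym (negbTE hab); simpI.
- rewrite mkfun_em (sum_one (b:=b)) => [|a hab]; rewrite !mxE; simpI.
    by case: (i == _); simpI.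
  by rewrite [b == a]eq_sym (negbTE hab); simpI.
- rewrite mkfun_e0 // big1 ?if_same // => a _.
  by rewrite !mxE (ep_e0 _ hj) (em_e0 _ hj); simpI.
Qed.

Lemma Bmx_mono : Bmx C N k = mono swp (fun _ => 1).
Proof.
apply/matrixP => i j; rewrite !mxE !summxE.
case: (idxP j) => [b|b|j' hj].
- rewrite swp_ep [X in _ + X]big1 => [|m hm]; last by rewrite !mxE [ep b == m]eq_sym (ep_e0 _ hm); simpI.
  rewrite addr0 (sum_one (b:=b)) => [|a hab]; rewrite !mxE; simpI.
    by case: (i == _).
  by rewrite [b == a]eq_sym (negbTE hab); simpI.
- rewrite swp_em [X in _ + X]big1 => [|m hm]; last by rewrite !mxE [em b == m]eq_sym (em_e0 _ hm); simpI.
  rewrite addr0 (sum_one (b:=b)) => [|a hab]; rewrite !mxE; simpI.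
    by case: (i == _).
  by rewrite [b == a]eq_sym (negbTE hab); simpI.
- rewrite swp_e0 // [X in X + _]big1 ?add0r => [|a _]; last first.
    by rewrite !mxE (ep_e0 _ hj) (em_e0 _ hj); simpI.
  rewrite (bigD1 j') //= big1 ?addr0 => [|m /andP[_ hm]]; rewrite !mxE; simpI.
    by case: (i == _).
  by rewrite [j' == m]eq_sym (negbTE hm); simpI.
Qed.

End Mono.

Section Norm.
Variable C : numFieldType.
Variables (N : nat) (k : bool).
Local Notation n := (dimV N k).
Local Notation ep := (@ep N k).
Local Notation em := (@em N k).
Local Notation swp := (@swp N k).
Local Notation mono := (@mono C N k).
Local Notation wfun := (@wfun C N k).

Definition commsw (s : 'I_n -> 'I_n) := forall j, s (swp j) = swp (s j).

Lemma commsw_inv (s : {perm 'I_n}) : commsw s -> commsw (s^-1)%g.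
Proof.
move=> hs j; apply: (@perm_inj _ s); by rewrite hs !permKV.
Qed.

Lemma commsw_e0 (s : 'I_n -> 'I_n) (j : 'I_n) : commsw s -> (N + N <= j)%N -> (N + N <= s j)%N.
Proof. by move=> hs hj; apply: swp_fix; rewrite -hs swp_e0. Qed.

Lemma orth_mono (s : {perm 'I_n}) c : commsw s ->
  Defs.orthogonal (mono s c) <-> (forall j, c j * c (swp j) = 1).
Proof.
move=> hs; rewrite /Defs.orthogonal trmx_mono Bmx_mono !mono_mul.
have e1 : forall j, (s^-1)%g (swp (s j)) = swp j by move=> j; rewrite -hs permK.
rewrite (@mono_ext _ _ _ _ _ swp (fun j => c (swp j) * c j)); first last.
- by move=> j /=; rewrite e1 mulr1.
- by move=> j /=; rewrite e1.
split => [/mono_coef h j|h]; first by rewrite mulrC h.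
by apply: mono_ext => // j; rewrite mulrC h.
Qed.

Lemma wfun_swp x (j : 'I_n) : wfun x (swp j) = - wfun x j.
Proof.
rewrite /wfun; case: (idxP j) => [a|a|j' hj].
- by rewrite swp_ep mkfun_em mkfun_ep.
- by rewrite swp_em mkfun_em mkfun_ep opprK.
- by rewrite swp_e0 // mkfun_e0 // oppr0.
Qed.

Lemma wfun_perm (s : 'I_n -> 'I_n) y : commsw s ->
  forall j, wfun y (s j) = wfun (fun a => wfun y (s (ep a))) j.
Proof.
move=> hs j; case: (idxP j) => [a|a|j' hj].
- by rewrite /wfun mkfun_ep.
- by rewrite {2}/wfun mkfun_em -swp_ep hs wfun_swp.
- by rewrite /wfun !mkfun_e0 // commsw_e0.
Qed.

Lemma mono_unitmx (s : {perm 'I_n}) c : (forall j, c j != 0) -> mono s c \in unitmx.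
Proof. by move=> hc; case: (mulmx1_unit (mono_unit s hc)). Qed.

Lemma conj_cartan (s : {perm 'I_n}) c x y : (forall j, c j != 0) ->
  (forall j, wfun y (s j) = wfun x j) ->
  mono s c *m cartan k x *m invmx (mono s c) = cartan k y.
Proof.
move=> hc hw; have hu := mono_unitmx s hc.
have -> : mono s c *m cartan k x = cartan k y *m mono s c.
  rewrite !cartan_mono !mono_mul; apply: mono_ext => // j /=.
  by rewrite hw mulrC.
by rewrite mulmxK.
Qed.

Lemma coef_nz (c : 'I_n -> C) : (forall j, c j * c (swp j) = 1) -> forall j, c j != 0.
Proof. by move=> h j; apply/eqP => h0; have := h j; rewrite h0 mul0r => /eqP; rewrite eq_sym oner_eq0. Qed.

Lemma mono_normalizer (s : {perm 'I_n}) c : commsw s ->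
  (forall j, c j * c (swp j) = 1) -> in_normalizer (mono s c).
Proof.
move=> hs hc; have hnz := coef_nz hc; split; first exact/orth_mono.
split.
- move=> x; exists (fun a => wfun x ((s^-1)%g (ep a))); apply: conj_cartan => // j.
  by rewrite -(wfun_perm _ (commsw_inv hs)) permK.
- move=> y; exists (fun a => wfun y (s (ep a))); apply: conj_cartan => // j.
  exact: wfun_perm.
Qed.

End Norm.

Section Conv.
Variable C : numFieldType.
Variables (N : nat) (k : bool).
Local Notation n := (dimV N k).
Local Notation ep := (@ep N k).
Local Notation em := (@em N k).
Local Notation swp := (@swp N k).
Local Notation mono := (@mono C N k).
Local Notation wfun := (@wfun C N k).

Lemma BB : Bmx C N k *m Bmx C N k = 1%:M.
Proof. by rewrite Bmx_mono mono_mul -mono1; apply: mono_ext => j //=; rewrite ?swpK ?mulr1. Qed.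

Lemma orth_unit (g : 'M[C]_n) : Defs.orthogonal g -> g \in unitmx.
Proof.
rewrite /Defs.orthogonal => h.
have : (Bmx C N k *m g^T *m Bmx C N k) *m g = 1%:M.
  by rewrite -!mulmxA [g^T *m _]mulmxA h BB.
by case/mulmx1_unit.
Qed.

Definition x0 : 'I_N -> C := fun a => (a.+1)%:R.

Lemma w0_inj : injective (wfun x0).
Proof.
have pos : forall a : 'I_N, (0 : C) < (a.+1)%:R by move=> a; rewrite ltr0Sn.
move=> i j; rewrite /wfun.
case: (idxP i) => [a|a|i' hi]; case: (idxP j) => [b|b|j' hj];
  rewrite ?mkfun_ep ?mkfun_em ?mkfun_e0 //= /x0.
- by move/eqP; rewrite eqr_nat eqSS => /eqP /val_inj ->.
- move/eqP; rewrite -subr_eq0 opprK -natrD pnatr_eq0 //.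
- by move/eqP; rewrite pnatr_eq0.
- move/eqP; rewrite eq_sym -subr_eq0 opprK -natrD pnatr_eq0 //.
- by move/oppr_inj/eqP; rewrite eqr_nat eqSS => /eqP /val_inj ->.
- by move/eqP; rewrite oppr_eq0 pnatr_eq0.
- by move/esym/eqP; rewrite pnatr_eq0.
- by move/esym/eqP; rewrite oppr_eq0 pnatr_eq0.
- by move=> _; apply: e0_uniq.
Qed.

Lemma mul_diag_r (A : 'M[C]_n) w : A *m mono id w = \matrix_(i, j) (A i j * w j).
Proof.
apply/matrixP => i j; rewrite !mxE (bigD1 j) //= big1 ?addr0; first by rewrite monoE eqxx.
by move=> m hm; rewrite monoE /= (negbTE hm) mulr0.
Qed.

Lemma mul_diag_l (A : 'M[C]_n) w : mono id w *m A = \matrix_(i, j) (w i * A i j).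
Proof.
apply/matrixP => i j; rewrite !mxE (bigD1 i) //= big1 ?addr0; first by rewrite monoE eqxx.
by move=> m hm; rewrite monoE /= eq_sym (negbTE hm) mul0r.
Qed.

Lemma normalizer_mono g : in_normalizer g ->
  exists (s : {perm 'I_n}) c, g = mono s c /\ commsw s /\
    (forall j, c j * c (swp j) = 1).
Proof.
case=> horth [hx _]; have gU := orth_unit horth.
have [y hy] := hx x0.
have H : g *m cartan k x0 = cartan k y *m g.
  by rewrite -hy mulmxKV.
have key : forall i j, g i j != 0 -> wfun x0 j = wfun y i.
  move=> i j hij; move/matrixP: H => /(_ i j).
  rewrite !cartan_mono mul_diag_r mul_diag_l !mxE mulrC => /mulIf; apply; exact: hij.
have row_nz : forall i, exists j, g i j != 0.
  move=> i; have := congr1 (fun M : 'M[C]_n => M i i) (mulmxV gU).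
  rewrite !mxE eqxx /= => h.
  case: (boolP [exists j, g i j != 0]) => [/existsP //|].
  rewrite negb_exists => /forallP hz; move: h; rewrite big1 => [/eqP|j _].
    by rewrite eq_sym oner_eq0.
  by move: (hz j); rewrite negbK => /eqP ->; rewrite mul0r.
have col_nz : forall j, exists i, g i j != 0.
  move=> j; have := congr1 (fun M : 'M[C]_n => M j j) (mulVmx gU).
  rewrite !mxE eqxx /= => h.
  case: (boolP [exists i, g i j != 0]) => [/existsP //|].
  rewrite negb_exists => /forallP hz; move: h; rewrite big1 => [/eqP|i _].
    by rewrite eq_sym oner_eq0.
  by move: (hz i); rewrite negbK => /eqP ->; rewrite mulr0.
have row_u : forall i j j', g i j != 0 -> g i j' != 0 -> j = j'.
  by move=> i j j' h1 h2; apply: w0_inj; rewrite (key _ _ h1) (key _ _ h2).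
pose s0 j := odflt j [pick i | g i j != 0].
have hs0 : forall j, g (s0 j) j != 0.
  move=> j; rewrite /s0; case: pickP => [i //|hz].
  by have [i hi] := col_nz j; move: (hz i); rewrite hi.
have s0_inj : injective s0.
  move=> j j' e; apply: (row_u (s0 j)); first exact: hs0.
  by rewrite e; exact: hs0.
pose s := perm s0_inj.
have hs : forall j, g (s j) j != 0 by move=> j; rewrite permE.
have supp : forall i j, g i j != 0 -> i = s j.
  move=> i j hij; have := hs ((s^-1)%g i); rewrite permKV => h.
  by rewrite (row_u _ _ _ hij h) permKV.
have gE : g = mono s (fun j => g (s j) j).
  apply/matrixP => i j; rewrite monoE; case: eqP => [->//|ne].
  by apply/eqP; apply: contraT => /supp.
have cs : commsw s.
  move=> j; set i := swp (s j).
  have e1 : wfun y i = - wfun x0 j.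
    by rewrite /i wfun_swp -(key _ _ (hs j)).
  have e2 : wfun x0 ((s^-1)%g i) = wfun y i.
    by rewrite (key _ _ (hs ((s^-1)%g i))) permKV.
  have : (s^-1)%g i = swp j by apply: w0_inj; rewrite e2 e1 wfun_swp.
  by move=> <-; rewrite permKV.
exists s, (fun j => g (s j) j); split => //; split => //.
by apply/orth_mono => //; rewrite -gE.
Qed.

End Conv.

Section SeqNext.
Variable T : eqType.

Lemma next_nth_cons (y : T) s i : uniq (y :: s) -> (i < (size s).+1)%N ->
  next (y :: s) (nth y (y :: s) i) = nth y s i.
Proof.
move=> u hi; rewrite next_nth mem_nth // index_uniq //.
Qed.

Lemma zip_next (s : seq T) : uniq s -> zip s (rot 1 s) = [seq (x, next s x) | x <- s].
Proof.
case: s => [//|y s] u; apply: (@eq_from_nth _ (y, y)).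
  by rewrite size_zip size_rot size_map minnn.
rewrite size_zip size_rot minnn => i hi.
rewrite nth_zip ?size_rot // (nth_map y) // rot1_cons nth_rcons_default.
by rewrite next_nth_cons.
Qed.

Lemma next_fun (F : nat -> T) L i : (0 < L)%N -> uniq [seq F m | m <- iota 0 L] ->
  (i < L)%N -> next [seq F m | m <- iota 0 L] (F i) =
    F (if (i.+1 < L)%N then i.+1 else 0%N).
Proof.
case: L => [//|L] _ u hi.
have e : F i = nth (F 0%N) [seq F m | m <- iota 0 L.+1] i by rewrite (nth_map 0%N) ?size_iota // nth_iota.
have hs : [seq F m | m <- iota 0 L.+1] = F 0%N :: [seq F m | m <- iota 1 L] by [].
rewrite e hs next_nth_cons -?hs //; last by rewrite size_map size_iota.
case: ltnP => h.
  by rewrite -/(iota 1 L) (nth_map 0%N) ?size_iota // nth_iota //; lia.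
rewrite nth_default // size_map size_iota; lia.
Qed.

End SeqNext.

Section NF.
Variable C : fieldType.
Variables (N : nat) (k : bool).
Local Notation n := (dimV N k).
Local Notation ep := (@ep N k).
Local Notation em := (@em N k).
Local Notation mono := (@mono C N k).

Lemma cyc_partE (s : seq 'I_n) (cc : C) : uniq s ->
  cyc_part s cc = \matrix_(i, j) (if j \in s then (if i == next s j then cc else 0) else 0).
Proof.
move=> u; rewrite /cyc_part zip_next // big_map; apply/matrixP => i j.
rewrite summxE !mxE /=; case: ifP => hj.
  rewrite (bigD1_seq j) //= !mxE eqxx andbT big1_seq ?addr0 => [|x /andP[hx _]].
    by case: (i == _); rewrite ?mulr1 ?mulr0.
  by rewrite !mxE [j == x]eq_sym (negbTE hx) andbF mulr0.
rewrite big1_seq // => x /andP[_ hx]; rewrite !mxE.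
have /negbTE -> : j != x by apply: contraFN hj => /eqP ->.
by rewrite andbF mulr0.
Qed.

Lemma id_offE (s : seq 'I_n) :
  id_off C s = \matrix_(i, j) (if j \in s then 0 else (i == j)%:R).
Proof.
apply/matrixP => i j; rewrite summxE !mxE; case: ifP => hj.
  rewrite big1 // => m hm; rewrite !mxE.
  have /negbTE -> : j != m by apply: contraTN hj => /eqP ->.
  by rewrite andbF.
rewrite (bigD1 j) ?hj //= !mxE eqxx andbT big1 ?addr0 // => m /andP[_ hm].
by rewrite !mxE [j == m]eq_sym (negbTE hm) andbF.
Qed.

Lemma prod_mono (I : eqType) (L : seq I) (F : I -> 'M[C]_n) (S : I -> 'I_n -> bool)
    (s : 'I_n -> 'I_n) (cf : 'I_n -> C) :
  (forall t, t \in L -> F t = mono (fun j => if S t j then s j else j)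
                                   (fun j => if S t j then cf j else 1)) ->
  (forall t j, t \in L -> S t j -> S t (s j)) ->
  pairwise (fun t1 t2 => [forall j, ~~ (S t1 j && S t2 j)]) L ->
  \prod_(t <- L) F t = mono (fun j => if has (fun t => S t j) L then s j else j)
                             (fun j => if has (fun t => S t j) L then cf j else 1).
Proof.
elim: L => [|t L IH] hF hS hP.
  rewrite big_nil (_ : 1 = 1%:M :> 'M[C]_n) // -mono1; exact: mono_ext.
move: hP; rewrite pairwise_cons => /andP[/allP hd hP].
rewrite big_cons IH; first last.
- exact: hP.
- by move=> t' j ht'; apply: hS; rewrite inE ht' orbT.
- by move=> t' ht'; apply: hF; rewrite inE ht' orbT.
rewrite hF ?mem_head //.
change (mono _ _ * mono _ _) with (mono (fun j => if S t j then s j else j)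
   (fun j => if S t j then cf j else 1) *m
   mono (fun j => if has (fun t => S t j) L then s j else j)
        (fun j => if has (fun t => S t j) L then cf j else 1)).
rewrite mono_mul; apply: mono_ext => j /=.
- case: (boolP (S t j)) => htj.
    have -> : has (fun t => S t j) L = false.
      apply/negbTE/hasPn => t' ht'; have := hd t' ht'.
      by move/forallP/(_ j); rewrite htj.
    by rewrite htj.
  case: (boolP (has (fun t => S t j) L)) => hh; last by rewrite (negbTE htj).
  case/hasP: hh => t' ht' h'; have := hS t' j; rewrite inE ht' orbT => /(_ isT h') h2.
  have := hd t' ht'; move/forallP/(_ (s j)); rewrite h2 andbT => /negbTE ->.
  done.
- case: (boolP (S t j)) => htj.
    have -> : has (fun t => S t j) L = false.
      apply/negbTE/hasPn => t' ht'; have := hd t' ht'.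
      by move/forallP/(_ j); rewrite htj.
    by rewrite htj mulr1.
  case: (boolP (has (fun t => S t j) L)) => hh; last by rewrite (negbTE htj) mulr1.
  case/hasP: hh => t' ht' h'; have := hS t' j; rewrite inE ht' orbT => /(_ isT h') h2.
  have := hd t' ht'; move/forallP/(_ (s j)); rewrite h2 andbT => /negbTE ->.
  by rewrite mul1r.
Qed.


Lemma ep_in_em (x : 'I_N) (a : seq 'I_N) : (ep x \in map em a) = false.
Proof. by apply/negbTE/mapP => -[y _ /eqP]; rewrite ep_em. Qed.
Lemma em_in_ep (x : 'I_N) (a : seq 'I_N) : (em x \in map ep a) = false.
Proof. by apply/negbTE/mapP => -[y _ /eqP]; rewrite em_ep. Qed.
Lemma e0_in_ep (j : 'I_n) (a : seq 'I_N) : (N + N <= j)%N -> (j \in map ep a) = false.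
Proof. by move=> hj; apply/negbTE/mapP => -[y _ e]; move: hj; rewrite e /=; have := ltn_ord y; lia. Qed.
Lemma e0_in_em (j : 'I_n) (a : seq 'I_N) : (N + N <= j)%N -> (j \in map em a) = false.
Proof. by move=> hj; apply/negbTE/mapP => -[y _ e]; move: hj; rewrite e /=; have := ltn_ord y; lia. Qed.
Lemma ep_in_ep (x : 'I_N) (a : seq 'I_N) : (ep x \in map ep a) = (x \in a).
Proof. exact/mem_map/ep_inj. Qed.
Lemma em_in_em (x : 'I_N) (a : seq 'I_N) : (em x \in map em a) = (x \in a).
Proof. exact/mem_map/em_inj. Qed.

Lemma uniq_pm (a : seq 'I_N) : uniq a -> uniq (map ep a ++ map em a).
Proof.
move=> u.
have u1 : uniq (map ep a) by rewrite map_inj_uniq //; exact: ep_inj.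
have u2 : uniq (map em a) by rewrite map_inj_uniq //; exact: em_inj.
rewrite cat_uniq u1 u2 andbT /=; apply/hasPn => j /mapP [x _ ->]; by rewrite em_in_ep.
Qed.

Lemma plus_local (z lam : C) (a : seq 'I_N) (s : 'I_n -> 'I_n) (cf : 'I_n -> C) :
  uniq a ->
  (forall x, x \in a -> s (ep x) = next (map ep a) (ep x)) ->
  (forall x, x \in a -> s (em x) = next (map em a) (em x)) ->
  (forall x, x \in a -> cf (ep x) = z^-1 * lam^-1) ->
  (forall x, x \in a -> cf (em x) = z * lam) ->
  plus_op k z a lam =
    mono (fun j => if j \in map ep a ++ map em a then s j else j)
         (fun j => if j \in map ep a ++ map em a then cf j else 1).
Proof.
move=> u hsp hsm hcp hcm.
have u1 : uniq (map ep a) by rewrite map_inj_uniq //; exact: ep_inj.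
have u2 : uniq (map em a) by rewrite map_inj_uniq //; exact: em_inj.
apply/matrixP => i j; rewrite /plus_op (cyc_partE _ u2) (cyc_partE _ u1) id_offE !mxE.
case: (idxP j) => [x|x|j' hj].
- rewrite !mem_cat ep_in_em ep_in_ep orbF; case: ifP => hx.
    by rewrite add0r addr0 hsp // hcp.
  by rewrite !add0r; case: (i == _).
- rewrite !mem_cat em_in_ep em_in_em /=; case: ifP => hx.
    by rewrite !addr0 hsm // hcm.
  by rewrite !add0r; case: (i == _).
- rewrite !mem_cat e0_in_ep // e0_in_em // !add0r.
  by case: (i == _).
Qed.

Lemma minus_local (a : seq 'I_N) (s : 'I_n -> 'I_n) (cf : 'I_n -> C) :
  uniq a ->
  (forall j, j \in map ep a ++ map em a -> s j = next (map ep a ++ map em a) j) ->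
  (forall j, j \in map ep a ++ map em a -> cf j = 1) ->
  @minus_op C N k a =
    mono (fun j => if j \in map ep a ++ map em a then s j else j)
         (fun j => if j \in map ep a ++ map em a then cf j else 1).
Proof.
move=> u hs hcf; have u' := uniq_pm u.
apply/matrixP => i j; rewrite /minus_op (cyc_partE _ u') id_offE !mxE.
case: ifP => hj; first by rewrite addr0 hs // hcf.
by rewrite add0r; case: (i == _).
Qed.

Lemma eps_mono (eps : C) :
  @eps_op C N k eps = mono id (fun j => if (N + N <= j)%N then eps else 1).
Proof.
apply/matrixP => i j; rewrite !mxE !summxE /=.
case hj: (N + N <= j)%N.
  rewrite big1 ?add0r => [|m hm]; last first.
    rewrite !mxE; have /negbTE -> : j != m.
      by apply/eqP => e; move: hm hj; rewrite e => /= hm hj; move: hm; rewrite ltnNge hj.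
    by rewrite andbF.
  rewrite (bigD1 j) ?hj //= big1 ?addr0 => [|m /andP[_ hm]].
    by rewrite !mxE eqxx andbT; case: (i == _); rewrite ?mulr1 ?mulr0.
  by rewrite !mxE [j == m]eq_sym (negbTE hm) andbF mulr0.
rewrite [X in _ + X]big1 ?addr0 => [|m hm]; last first.
  rewrite !mxE; have /negbTE -> : j != m.
    by apply/eqP => e; move: hm hj; rewrite e => ->.
  by rewrite andbF mulr0.
rewrite (bigD1 j) /=; last by rewrite ltnNge hj.
rewrite big1 ?addr0 => [|m /andP[_ hm]].
  by rewrite !mxE eqxx andbT; case: (i == _).
by rewrite !mxE [j == m]eq_sym (negbTE hm) andbF.
Qed.

End NF.

Section IdxMore.
Variables (N : nat) (k : bool).
Local Notation n := (dimV N k).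
Local Notation ep := (@ep N k).
Local Notation em := (@em N k).
Local Notation swp := (@swp N k).
Local Notation idx := (@idx N k).

Lemma idx_cases (j : 'I_n) :
  (exists a, j = ep a) \/ (exists a, j = em a) \/ (N + N <= j)%N.
Proof. case: (idxP j) => [a|a|j' h]; [left|right;left|right;right] => //; by exists a. Qed.

Lemma idx_e0 b a : (N + N <= idx b a)%N = false.
Proof. by apply/negbTE; rewrite -ltnNge; case: b => /=; have := ltn_ord a; lia. Qed.

Lemma idx_inj2 b a b' a' : idx b a = idx b' a' -> b = b' /\ a = a'.
Proof.
case: b; case: b' => /= h; split => //;
  by [ apply: em_inj h | apply: ep_inj h | move: h => /eqP; rewrite ?ep_em ?em_ep ].
Qed.

Lemma idx_em (j : 'I_n) b a : j = idx b a -> j = idx (j == em a) a.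
Proof. by move=> ->; case: b => /=; rewrite ?eqxx ?ep_em. Qed.

Lemma ext_sw (F G : 'I_n -> 'I_n) : commsw F -> commsw G ->
  (forall a, F (ep a) = G (ep a)) -> (forall j : 'I_n, (N + N <= j)%N -> F j = G j) ->
  F =1 G.
Proof.
move=> hF hG hep he0 j; case: (idxP j) => [a|a|j' hj]; last exact: he0.
  exact: hep.
by rewrite -swp_ep hF hG hep.
Qed.

End IdxMore.

Section Core.
Variable C : numClosedFieldType.
Variables (N : nat) (k : bool).
Local Notation n := (dimV N k).
Local Notation ep := (@ep N k).
Local Notation em := (@em N k).
Local Notation swp := (@swp N k).
Local Notation idx := (@idx N k).
Variable sig : {perm 'I_n}.
Variable c : 'I_n -> C.
Hypothesis hs : commsw sig.
Hypothesis hc : forall j, c j * c (swp j) = 1.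

Definition proj : 'I_n -> option 'I_N :=
  mkfun (fun a => Some a) (fun a => Some a) (fun _ => None).

Definition pi0 (a : 'I_N) : 'I_N := odflt a (proj (sig (ep a))).
Definition sg (a : 'I_N) : bool := sig (ep a) == em (pi0 a).

Lemma sig_ep a : sig (ep a) = idx (sg a) (pi0 a).
Proof.
rewrite /sg /pi0; case: (idx_cases (sig (ep a))) => [[b ->]|[[b ->]|h]].
- by rewrite /proj mkfun_ep /= ep_em.
- by rewrite /proj mkfun_em /= eqxx.
- exfalso; have : swp (sig (ep a)) = sig (ep a) by rewrite swp_e0.
  by rewrite -hs swp_ep => /perm_inj /eqP; rewrite em_ep.
Qed.

Lemma sig_idx b a : sig (idx b a) = idx (b (+) sg a) (pi0 a).
Proof.
case: b => /=; last by rewrite sig_ep.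
by rewrite -swp_ep hs sig_ep swp_idx.
Qed.

Lemma pi0_inj : injective pi0.
Proof.
move=> a b e; have ha := sig_ep a; have hb := sig_ep b; rewrite e in ha.
case: (boolP (sg a == sg b)) => [/eqP ee|ne].
  by rewrite ee -hb in ha; move/perm_inj/ep_inj: ha.
have : sig (ep a) = sig (em b).
  rewrite ha -swp_ep hs hb swp_idx; congr idx.
  by case: (sg a) (sg b) ne => [] [].
by move/perm_inj/eqP; rewrite ep_em.
Qed.

Definition pp := perm pi0_inj.

Lemma piE a : pp a = pi0 a. Proof. by rewrite permE. Qed.

Definition H (r : 'I_N) (i : nat) : 'I_n := iter i sig (ep r).

Lemma H_idx r i : exists b, H r i = idx b (iter i pp r).
Proof.
elim: i => [|i [b IH]]; first by exists false.
exists (b (+) sg (iter i pp r)); by rewrite /H !iterS -/(H r i) IH sig_idx piE.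
Qed.

Local Notation rt := (froot pp).
Definition ix (a : 'I_N) := findex pp (rt a) a.
Definition ord (r : 'I_N) := fingraph.order pp r.

Lemma pi_inj : injective pp. Proof. exact: perm_inj. Qed.
Lemma fsym : connect_sym (rel_of_simpl (frel pp)). Proof. exact: fconnect_sym pi_inj. Qed.

Lemma conn a : fconnect pp (rt a) a.
Proof. by rewrite fsym; apply: connect_root. Qed.

Lemma rt_f a : rt (pp a) = rt a.
Proof. have := elimT (fingraph.rootP fsym) (fconnect1 pp a). by move=> ->. Qed.

Lemma rt_rt a : rt (rt a) = rt a.
Proof. exact: (fingraph.root_root fsym). Qed.

Lemma iter_ix a : iter (ix a) pp (rt a) = a.
Proof. exact: iter_findex (conn a). Qed.

Lemma ix_lt a : (ix a < ord (rt a))%N.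
Proof. exact: findex_max (conn a). Qed.

Lemma ix_succ a : ((ix a).+1 < ord (rt a))%N -> ix (pp a) = (ix a).+1.
Proof.
move=> h; rewrite /ix rt_f; have -> : pp a = iter (ix a).+1 pp (rt a) by rewrite iterS iter_ix.
exact: findex_iter.
Qed.

Lemma ix_last a : (ix a).+1 = ord (rt a) -> pp a = rt a.
Proof. by move=> h; rewrite -{1}(iter_ix a) -iterS h /ord (iter_order pi_inj). Qed.

Lemma ix_rt a : ix (rt a) = 0%N.
Proof. by rewrite /ix rt_rt findex0. Qed.

Lemma ord_gt0 r : (0 < ord r)%N. Proof. exact: fingraph.order_gt0. Qed.

Definition hA (a : 'I_N) := H (rt a) (ix a).
Definition fb (a : 'I_N) := hA a == em a.

Lemma hA_idx a : hA a = idx (fb a) a.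
Proof.
have [b hb] := H_idx (rt a) (ix a); rewrite iter_ix in hb.
exact: (idx_em hb).
Qed.


Definition nu0 : 'I_n -> 'I_n :=
  mkfun (fun a => idx (fb a) a) (fun a => idx (~~ fb a) a) id.

Lemma nu0_idx b a : nu0 (idx b a) = idx (b (+) fb a) a.
Proof. by case: b; rewrite /nu0 /= ?mkfun_ep ?mkfun_em. Qed.

Lemma nu0K : involutive nu0.
Proof.
move=> j; case: (idxP j) => [a|a|j' hj].
- by rewrite -[ep a]/(idx false a) !nu0_idx addbK.
- by rewrite -[em a]/(idx true a) !nu0_idx addbK.
- by rewrite /nu0 !mkfun_e0.
Qed.

Lemma nu0_sw : commsw nu0.
Proof.
move=> j; case: (idxP j) => [a|a|j' hj].
- by rewrite swp_ep -[ep a]/(idx false a) -[em a]/(idx true a) !nu0_idx swp_idx /= ?negbK.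
- by rewrite swp_em -[ep a]/(idx false a) -[em a]/(idx true a) !nu0_idx swp_idx /= negbK.
- by rewrite /nu0 swp_e0 // mkfun_e0 // swp_e0.
Qed.

Definition nu := perm (can_inj nu0K).
Lemma nuE j : nu j = nu0 j. Proof. by rewrite permE. Qed.

Lemma nu_sw : commsw nu.
Proof. by move=> j; rewrite !nuE nu0_sw. Qed.

Lemma nu_ep a : nu (ep a) = hA a.
Proof. by rewrite nuE -[ep a]/(idx false a) nu0_idx hA_idx. Qed.

Definition pos (r : 'I_N) := H r (ord r) == ep r.

Definition T (a : 'I_N) : 'I_n :=
  if (ix a).+1 == ord (rt a) then (if pos (rt a) then ep (rt a) else em (rt a))
  else ep (pp a).

Definition sig0 : 'I_n -> 'I_n := mkfun T (fun a => swp (T a)) id.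

Lemma sig0_sw : commsw sig0.
Proof.
move=> j; case: (idxP j) => [a|a|j' hj].
- by rewrite swp_ep /sig0 mkfun_em mkfun_ep.
- by rewrite swp_em /sig0 mkfun_em mkfun_ep swpK.
- by rewrite /sig0 swp_e0 // mkfun_e0 // swp_e0.
Qed.

Lemma commsw_comp (F G : 'I_n -> 'I_n) : commsw F -> commsw G -> commsw (F \o G).
Proof. by move=> hF hG j /=; rewrite hG hF. Qed.

Lemma hA_rt a : hA (rt a) = ep (rt a).
Proof. by rewrite /hA rt_rt ix_rt. Qed.

Lemma HS r i : sig (H r i) = H r i.+1.
Proof. by rewrite /H iterS. Qed.

Lemma H_ord r : H r (ord r) = idx (~~ pos r) r.
Proof.
have [b hb] := H_idx r (ord r); rewrite /ord (iter_order pi_inj) in hb.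
rewrite /pos /ord hb; by case: (b) => /=; rewrite ?eqxx ?em_ep.
Qed.

Lemma main1 : forall j, sig (nu j) = nu (sig0 j).
Proof.
apply: (@ext_sw _ _ (sig \o nu) (nu \o sig0)).
- exact: commsw_comp hs nu_sw.
- exact: commsw_comp nu_sw sig0_sw.
- move=> a /=; rewrite nu_ep /sig0 mkfun_ep /T /hA HS.
  case: eqP => [hl|hl].
    have e1 := H_ord (rt a); rewrite -hl in e1; rewrite e1.
    case: (pos (rt a)) => /=; first by rewrite nu_ep hA_rt.
    by rewrite -swp_ep nu_sw nu_ep hA_rt swp_ep.
  have hl' : ((ix a).+1 < ord (rt a))%N.
    by have := ix_lt a; rewrite leq_eqVlt => /orP[/eqP//|].
  by rewrite nu_ep /hA rt_f ix_succ.
- move=> j hj /=; rewrite /sig0 mkfun_e0 // nuE /nu0 mkfun_e0 //.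
  by apply: e0_uniq => //; apply: commsw_e0.
Qed.


Definition Q (r : 'I_N) (i : nat) : C := \prod_(m < i) c (H r m).
Definition mu (r : 'I_N) : C := Q r (ord r).
Definition beta (r : 'I_N) : C := if pos r then (ord r).-root (mu r) else 1.
Definition delta (r : 'I_N) : C := if pos r then 1 else 2.-root (mu r).
Definition E (a : 'I_N) : C :=
  Q (rt a) (ix a) / (delta (rt a) * beta (rt a) ^+ ix a).
Definition e : 'I_n -> C := mkfun E (fun a => (E a)^-1) (fun _ => 1).
Definition c0 : 'I_n -> C :=
  mkfun (fun a => beta (rt a)) (fun a => (beta (rt a))^-1) c.

Lemma c_nz j : c j != 0. Proof. exact: coef_nz hc j. Qed.

Lemma c_swp j : c (swp j) = (c j)^-1.
Proof. by apply: (mulfI (c_nz j)); rewrite hc mulfV // c_nz. Qed.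

Lemma Q_nz r i : Q r i != 0.
Proof. by apply/prodf_neq0 => m _; apply: c_nz. Qed.

Lemma beta_nz r : beta r != 0.
Proof.
rewrite /beta; case: (pos r) => //; last exact: oner_neq0.
by rewrite rootC_eq0 ?ord_gt0 // Q_nz.
Qed.

Lemma delta_nz r : delta r != 0.
Proof.
rewrite /delta; case: (pos r) => //; first exact: oner_neq0.
by rewrite rootC_eq0 // Q_nz.
Qed.

Lemma E_nz a : E a != 0.
Proof. by rewrite /E mulf_neq0 ?invr_eq0 ?mulf_neq0 ?expf_neq0 ?Q_nz ?delta_nz ?beta_nz. Qed.

Lemma e_swp j : e (swp j) = (e j)^-1.
Proof.
rewrite /e; case: (idxP j) => [a|a|j' hj].
- by rewrite swp_ep mkfun_em mkfun_ep.
- by rewrite swp_em mkfun_em mkfun_ep invrK.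
- by rewrite swp_e0 // mkfun_e0 // invr1.
Qed.

Lemma E_rt a : E (rt a) = (delta (rt a))^-1.
Proof. by rewrite /E rt_rt ix_rt /Q big_ord0 expr0 mulr1 mul1r. Qed.

Lemma QS r i : Q r i.+1 = Q r i * c (H r i).
Proof. by rewrite /Q big_ord_recr. Qed.

Lemma main2_ep a : c0 (ep a) = c (nu (ep a)) * e (ep a) / e (sig0 (ep a)).
Proof.
rewrite /c0 /e /sig0 !mkfun_ep nu_ep /T /hA.
have bnz := beta_nz (rt a); have dnz := delta_nz (rt a).
have qnz := Q_nz (rt a) (ix a); have cnz := c_nz (H (rt a) (ix a)).
case: eqP => [hl|hl].
  case hp: (pos (rt a)).
    rewrite mkfun_ep E_rt /E /delta hp invr1 divr1 mul1r.
    have : beta (rt a) ^+ ord (rt a) = mu (rt a) by rewrite /beta hp rootCK ?ord_gt0.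
    rewrite -hl /mu -hl QS exprS => hb.
    apply: (mulIf (expf_neq0 (ix a) bnz)).
    rewrite hb; field; by rewrite expf_neq0.
  rewrite mkfun_em E_rt invrK /E.
  have hd : delta (rt a) ^+ 2 = mu (rt a) by rewrite /delta hp rootCK.
  have hb : beta (rt a) = 1 by rewrite /beta hp.
  move: hd; rewrite /mu -hl QS hb expr1n mulr1 => hd.
  apply: (mulIf dnz); apply: (mulIf dnz).
  rewrite mul1r -expr2 hd; field; by rewrite ?dnz.
have hl' : ((ix a).+1 < ord (rt a))%N.
  by have := ix_lt a; rewrite leq_eqVlt => /orP[/eqP//|].
rewrite mkfun_ep /E rt_f ix_succ // QS exprS.
field; by rewrite ?expf_neq0 ?bnz ?dnz ?cnz ?qnz.
Qed.

Lemma main2 j : c0 j = c (nu j) * e j / e (sig0 j).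
Proof.
case: (idxP j) => [a|a|j' hj]; first exact: main2_ep.
- rewrite -swp_ep nu_sw sig0_sw c_swp !e_swp.
  have -> : c0 (swp (ep a)) = (c0 (ep a))^-1 by rewrite /c0 swp_ep mkfun_em mkfun_ep.
  by rewrite main2_ep !invfM !invrK.
- rewrite /c0 /e /sig0 nuE /nu0 !mkfun_e0 //.
  by rewrite mulr1 divr1.
Qed.


Definition rts : seq 'I_N := [seq r <- enum 'I_N | rt r == r].
Definition orb (r : 'I_N) := fingraph.orbit pp r.
Definition Sr (r : 'I_N) : 'I_n -> bool :=
  mkfun (fun a => rt a == r) (fun a => rt a == r) (fun _ => false).

Lemma rts_root r : r \in rts -> rt r = r.
Proof. by rewrite mem_filter => /andP[/eqP]. Qed.

Lemma in_orb r x : rt r = r -> (x \in orb r) = (rt x == r).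
Proof.
move=> hr; rewrite /orb -fconnect_orbit -(fingraph.root_connect fsym) hr.
exact: eq_sym.
Qed.

Lemma Sr_mem r j : rt r = r -> Sr r j = (j \in map ep (orb r) ++ map em (orb r)).
Proof.
move=> hr; rewrite /Sr mem_cat; case: (idxP j) => [x|x|j' hj].
- by rewrite mkfun_ep ep_in_ep ep_in_em orbF in_orb.
- by rewrite mkfun_em em_in_ep em_in_em in_orb.
- by rewrite mkfun_e0 // e0_in_ep // e0_in_em.
Qed.

Lemma orb_uniq r : uniq (orb r). Proof. exact: fingraph.orbit_uniq. Qed.

Lemma orb_iota r : orb r = [seq iter m pp r | m <- iota 0 (ord r)].
Proof.
apply: (@eq_from_nth _ r); first by rewrite size_map size_iota /orb size_orbit.
move=> i; rewrite /orb size_orbit => hi.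
by rewrite /fingraph.orbit nth_traject // (nth_map 0%N) ?size_iota // nth_iota.
Qed.

Lemma orb_x r x : rt r = r -> x \in orb r -> x = iter (ix x) pp r /\ (ix x < ord r)%N.
Proof.
move=> hr; rewrite in_orb // => /eqP hx.
by rewrite -{1}(iter_ix x) hx; split => //; rewrite -hx ix_lt.
Qed.

Lemma T_cases x : (ix x).+1 != ord (rt x) -> ((ix x).+1 < ord (rt x))%N.
Proof. by move=> h; have := ix_lt x; rewrite leq_eqVlt => /orP[/eqP e|//]; rewrite e eqxx in h. Qed.

Variable zf : nat -> C.
Hypothesis zf_nz : forall l, zf l != 0.

Definition lam (r : 'I_N) : C := (zf (ord r) * beta r)^-1.

Definition G (r : 'I_N) : 'M[C]_n :=
  if pos r then plus_op k (zf (ord r)) (orb r) (lam r) else @minus_op C N k (orb r).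

Lemma G_local r : r \in rts ->
  G r = mono (fun j => if Sr r j then sig0 j else j) (fun j => if Sr r j then c0 j else 1).
Proof.
move=> hr'; have hr := rts_root hr'.
have -> : mono (fun j => if Sr r j then sig0 j else j) (fun j => if Sr r j then c0 j else 1)
  = mono (fun j => if j \in map ep (orb r) ++ map em (orb r) then sig0 j else j)
         (fun j => if j \in map ep (orb r) ++ map em (orb r) then c0 j else 1).
  by apply: mono_ext => j; rewrite Sr_mem.
have l0 := ord_gt0 r.
rewrite /G; case hp: (pos r).
  apply: plus_local; first exact: orb_uniq.
  - move=> x hx; have [ex hix] := orb_x hr hx.
    rewrite orb_iota -map_comp {2}ex (@next_fun _ (fun m => ep (iter m pp r))) //; last first.
      by rewrite map_comp -orb_iota map_inj_uniq ?orb_uniq //; exact: ep_inj.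
    rewrite /sig0 mkfun_ep /T.
    move: (in_orb x hr) (hx); rewrite in_orb // => _ /eqP hrx; rewrite hrx hp.
    case: eqP => [e|ne]; first by rewrite e ltnn.
    have := T_cases (x:=x); rewrite hrx => /(_ (introN eqP ne)) ->.
    by rewrite iterS -ex piE.
  - move=> x hx; have [ex hix] := orb_x hr hx.
    rewrite orb_iota -map_comp {2}ex (@next_fun _ (fun m => em (iter m pp r))) //; last first.
      by rewrite map_comp -orb_iota map_inj_uniq ?orb_uniq //; exact: em_inj.
    rewrite /sig0 mkfun_em /T.
    move: (hx); rewrite in_orb // => /eqP hrx; rewrite hrx hp.
    case: eqP => [e|ne]; first by rewrite e ltnn swp_ep.
    have := T_cases (x:=x); rewrite hrx => /(_ (introN eqP ne)) ->.
    by rewrite swp_ep iterS -ex piE.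
  - move=> x hx; move: (hx); rewrite in_orb // => /eqP hrx.
    rewrite /c0 mkfun_ep hrx /lam invrK mulrA mulVf ?mul1r //.
  - move=> x hx; move: (hx); rewrite in_orb // => /eqP hrx.
    rewrite /c0 mkfun_em hrx /lam invfM mulrA mulfV ?mul1r //.
apply: minus_local; first exact: orb_uniq.
- pose Gf m := if (m < ord r)%N then ep (iter m pp r) else em (iter (m - ord r) pp r).
  have eL : map ep (orb r) ++ map em (orb r) = [seq Gf m | m <- iota 0 (ord r + ord r)].
    apply: (@eq_from_nth _ (ep r)).
      by rewrite size_cat !size_map size_iota /orb size_orbit.
    rewrite size_cat !size_map /orb size_orbit => i hi.
    rewrite nth_cat size_map size_orbit (nth_map 0%N) ?size_iota // nth_iota // add0n /Gf.
    case: ifP => hil.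
      by rewrite (nth_map r) ?size_orbit // nth_traject.
    by rewrite (nth_map r) ?size_orbit ?nth_traject //; lia.
  have uL : uniq [seq Gf m | m <- iota 0 (ord r + ord r)] by rewrite -eL uniq_pm ?orb_uniq.
  rewrite eL => j /mapP [m]; rewrite mem_iota add0n => /andP[_ hm] ->.
  rewrite (@next_fun _ Gf) //; last lia.
  rewrite /Gf; case: ifP => hmr.
  + have hx : iter m pp r \in orb r by rewrite orb_iota; apply: map_f; rewrite mem_iota.
    have [ex hix] := orb_x hr hx.
    have hi : ix (iter m pp r) = m.
      by rewrite /ix (_ : rt (iter m pp r) = r) ?findex_iter //; move: hx; rewrite in_orb // => /eqP.
    rewrite hi in ex hix.
    rewrite /sig0 mkfun_ep /T hi (_ : rt (iter m pp r) = r); last by move: hx; rewrite in_orb // => /eqP.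
    rewrite hp; case: ifP => hm1.
      have h2 : (m.+1 < ord r + ord r)%N by lia.
      by rewrite h2 (eqP hm1) ltnn subnn.
    have h2 : (m.+1 < ord r + ord r)%N by lia.
    rewrite h2.
    have hm2 : (m.+1 < ord r)%N by move: hix hm1; rewrite leq_eqVlt eq_sym => /orP[->|].
    by rewrite hm2 iterS.
  + have hm' : (m - ord r < ord r)%N by lia.
    set y := iter (m - ord r) pp r.
    have hx : y \in orb r by rewrite orb_iota; apply: map_f; rewrite mem_iota.
    have hry : rt y = r by move: hx; rewrite in_orb // => /eqP.
    have hi : ix y = (m - ord r)%N by rewrite /ix hry findex_iter.
    rewrite /sig0 mkfun_em /T hi hry hp.
    case: ifP => hm1.
      move/eqP: hm1 => hm1.
      have h2 : (m.+1 < ord r + ord r)%N = false by move: hmr hm; lia.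
      by rewrite h2 l0 swp_em.
    move/negbT: hm1 => hm1.
    have h2 : (m.+1 < ord r + ord r)%N by move: hmr hm hm1 hm'; lia.
    have h3 : (m.+1 < ord r)%N = false by move: hmr; lia.
    rewrite h2 h3 swp_ep.
    by rewrite (_ : (m.+1 - ord r)%N = (m - ord r).+1) ?iterS //; move: hmr; lia.
- move=> j; rewrite mem_cat => /orP[] /mapP [x hx ->].
    by rewrite /c0 mkfun_ep (_ : rt x = r) ?/beta ?hp //; move: hx; rewrite in_orb // => /eqP.
  by rewrite /c0 mkfun_em (_ : rt x = r) ?/beta ?hp ?invr1 //; move: hx; rewrite in_orb // => /eqP.
Qed.


Definition L := [seq r <- rts | pos r] ++ [seq r <- rts | ~~ pos r].

Lemma L_perm : perm_eq L rts.
Proof. exact/permPl/perm_filterC. Qed.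

Lemma rts_uniq : uniq rts.
Proof. exact/filter_uniq/enum_uniq. Qed.

Lemma L_uniq : uniq L.
Proof. by rewrite (perm_uniq L_perm) rts_uniq. Qed.

Lemma L_mem r : (r \in L) = (r \in rts).
Proof. exact: (perm_mem L_perm r). Qed.

Lemma rt_in_rts x : rt x \in rts.
Proof. by rewrite mem_filter rt_rt eqxx mem_enum. Qed.

Lemma Sr_ep r x : Sr r (ep x) = (rt x == r). Proof. exact: mkfun_ep. Qed.
Lemma Sr_em r x : Sr r (em x) = (rt x == r). Proof. exact: mkfun_em. Qed.

Lemma has_Sr j : has (fun t => Sr t j) L = (j < N + N)%N.
Proof.
case: (idxP j) => [x|x|j' hj].
- rewrite /= (_ : (x < N + N)%N); last by have := ltn_ord x; lia.
  by apply/hasP; exists (rt x); rewrite ?L_mem ?rt_in_rts // Sr_ep.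
- rewrite /= (_ : (N + x < N + N)%N); last by have := ltn_ord x; lia.
  by apply/hasP; exists (rt x); rewrite ?L_mem ?rt_in_rts // Sr_em.
- rewrite ltnNge hj /=; apply/hasPn => t _; by rewrite /Sr mkfun_e0.
Qed.

Lemma Sr_sig0 r j : Sr r j -> Sr r (sig0 j).
Proof.
case: (idxP j) => [x|x|j' hj].
- rewrite Sr_ep /sig0 mkfun_ep /T => /eqP hx.
  case: ifP => _; last by rewrite Sr_ep rt_f hx.
  by case: (pos _); rewrite ?Sr_ep ?Sr_em rt_rt hx.
- rewrite Sr_em /sig0 mkfun_em /T => /eqP hx.
  case: ifP => _; last by rewrite swp_ep Sr_em rt_f hx.
  by case: (pos _); rewrite ?swp_ep ?swp_em ?Sr_ep ?Sr_em rt_rt hx.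
- by rewrite /Sr mkfun_e0.
Qed.

Lemma prodG : \prod_(r <- L) G r =
  mono (fun j => if (j < N + N)%N then sig0 j else j)
       (fun j => if (j < N + N)%N then c0 j else 1).
Proof.
rewrite (@prod_mono C N k _ L G Sr sig0 c0).
- by apply: mono_ext => j; rewrite has_Sr.
- by move=> t ht; apply: G_local; rewrite -L_mem.
- by move=> t j _; apply: Sr_sig0.
- apply: (@sub_pairwise _ [rel x y | x != y]); last by rewrite -uniq_pairwise L_uniq.
  move=> r1 r2 /= ne; apply/forallP => j; apply/negP => /andP[h1 h2].
  move: ne h1 h2; case: (idxP j) => [x|x|j' hj];
    rewrite ?Sr_ep ?Sr_em ?/Sr ?mkfun_e0 // => ne /eqP e1 /eqP e2; by rewrite -e1 -e2 eqxx in ne.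
Qed.

Definition ps : seq (seq 'I_N * C) := [seq (orb r, lam r) | r <- [seq r <- rts | pos r]].
Definition ms : seq (seq 'I_N) := [seq orb r | r <- [seq r <- rts | ~~ pos r]].

Lemma nf_eq : (\prod_(p <- ps) plus_op k (zf (size p.1)) p.1 p.2) *
              (\prod_(a <- ms) @minus_op C N k a) = \prod_(r <- L) G r.
Proof.
rewrite /L big_cat /ps /ms !big_map /=; congr (_ * _).
  apply: eq_big_seq => r; rewrite mem_filter => /andP[hp _].
  by rewrite /G hp /orb size_orbit.
apply: eq_big_seq => r; rewrite mem_filter => /andP[hp _].
by rewrite /G (negbTE hp).
Qed.

Lemma adm1 : all (fun p => 0 < size p.1)%N ps.
Proof. by apply/allP => p /mapP [r _ ->]; rewrite /orb size_orbit fingraph.order_gt0. Qed.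
Lemma adm2 : all (fun a => 0 < size a)%N ms.
Proof. by apply/allP => p /mapP [r _ ->]; rewrite /orb size_orbit fingraph.order_gt0. Qed.
Lemma adm3 : all (fun p => p.2 != 0) ps.
Proof. by apply/allP => p /mapP [r _ ->]; rewrite /lam invr_eq0 mulf_neq0 ?zf_nz ?beta_nz. Qed.

Lemma adm4 : perm_eq (flatten ([seq p.1 | p <- ps] ++ ms)) (enum 'I_N).
Proof.
have -> : [seq p.1 | p <- ps] ++ ms = map orb L by rewrite /ps /ms -map_comp map_cat.
rewrite /perm_eq; apply/allP => x _ /=; apply/eqP.
rewrite [RHS]count_uniq_mem ?enum_uniq // mem_enum count_flatten -map_comp.
have -> : [seq (count_mem x \o orb) r | r <- L] = [seq nat_of_bool (rt x == r) | r <- L].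
  apply/eq_in_map => r hr /=; rewrite count_uniq_mem ?orb_uniq // in_orb //.
  by apply: rts_root; rewrite -L_mem.
rewrite (sumn_count (fun r => rt x == r)).
have -> : count (fun r => rt x == r) L = count_mem (rt x) L.
  by apply: eq_count => r /=; rewrite eq_sym.
by rewrite count_uniq_mem ?L_uniq // L_mem rt_in_rts.
Qed.

Lemma e_nz j : e j != 0.
Proof.
rewrite /e; case: (idxP j) => [x|x|j' hj].
- by rewrite mkfun_ep E_nz.
- by rewrite mkfun_em invr_eq0 E_nz.
- by rewrite mkfun_e0 // oner_neq0.
Qed.

Lemma core_main : exists h : 'M[C]_n,
  in_normalizer h /\ h *m mono sig c *m invmx h = mono sig0 c0.
Proof.
pose d := fun i => (e ((nu^-1)%g i))^-1.
exists (mono (nu^-1)%g d); split.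
  apply: mono_normalizer; first exact: commsw_inv nu_sw.
  move=> i; rewrite /d (commsw_inv nu_sw) e_swp invrK mulVf //; exact: e_nz.
have hP : mono (nu^-1)%g d *m mono nu e = 1%:M.
  rewrite mono_mul -mono1; apply: mono_ext => j /=; first by rewrite permK.
  by rewrite /d permK mulVf // e_nz.
have hU : mono (nu^-1)%g d \in unitmx by case: (mulmx1_unit hP).
have -> : invmx (mono (nu^-1)%g d) = mono nu e.
  by rewrite -[LHS]mulmx1 -hP mulmxA mulVmx // mul1mx.
rewrite !mono_mul; apply: mono_ext => j /=.
  by rewrite main1 permK.
rewrite /d main1 permK main2; field; by rewrite ?e_nz.
Qed.

Lemma sig0_e0 (j : 'I_n) : (N + N <= j)%N -> sig0 j = j.
Proof. by move=> h; rewrite /sig0 mkfun_e0. Qed.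
Lemma c0_e0 (j : 'I_n) : (N + N <= j)%N -> c0 j = c j.
Proof. by move=> h; rewrite /c0 mkfun_e0. Qed.
Lemma ep_lt (x : 'I_N) : (ep x < N + N)%N. Proof. by rewrite /=; have := ltn_ord x; lia. Qed.
Lemma em_lt (x : 'I_N) : (em x < N + N)%N. Proof. by rewrite /=; have := ltn_ord x; lia. Qed.

Lemma T_lt x : (T x < N + N)%N.
Proof. by rewrite /T; case: ifP => _; [case: ifP => _|]; rewrite ?ep_lt ?em_lt. Qed.

Lemma sig0_lt (j : 'I_n) : (j < N + N)%N -> (sig0 j < N + N)%N.
Proof.
case: (idxP j) => [x|x|j' hj'] hj; last by move: hj hj'; lia.
  by rewrite /sig0 mkfun_ep T_lt.
rewrite /sig0 mkfun_em /T; case: ifP => _; [case: ifP => _|];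
  by rewrite ?swp_ep ?swp_em ?ep_lt ?em_lt.
Qed.


Lemma core_final : exists (ps : seq (seq 'I_N * C)) (ms : seq (seq 'I_N)) (h : 'M[C]_n),
  [/\ all (fun p => 0 < size p.1)%N ps, all (fun a => 0 < size a)%N ms,
      all (fun p => p.2 != 0) ps &
      perm_eq (flatten ([seq p.1 | p <- ps] ++ ms)) (enum 'I_N)] /\
      in_normalizer h /\
      h *m mono sig c *m invmx h =
      mono id (fun j => if (N + N <= j)%N then c j else 1) *m
      ((\prod_(p <- ps) plus_op k (zf (size p.1)) p.1 p.2) *
       (\prod_(a <- ms) @minus_op C N k a)).
Proof.
exists ps, ms; have [h [hn he]] := core_main; exists h; split.
  split; [exact: adm1 | exact: adm2 | exact: adm3 | exact: adm4].
split; first exact: hn.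
rewrite he nf_eq prodG mono_mul; apply: mono_ext => j /=.
  by case: ifP => // hj; rewrite sig0_e0 //; move: hj; rewrite ltnNge => /negbFE.
case hj: (j < N + N)%N.
  by rewrite leqNgt sig0_lt // mul1r.
have hj' : (N + N <= j)%N by rewrite leqNgt hj.
by rewrite hj' mulr1 c0_e0.
Qed.

End Core.

Lemma zeta_nz (R : realType) (l : nat) : zeta R l != 0.
Proof.
apply/eqP; rewrite /zeta; set t := (pi * _ / _).
move=> h; have h1 : cos t = 0 by move: (congr1 (@complex.Re R) h).
have h2 : sin t = 0 by move: (congr1 (@complex.Im R) h).
by have := cos2Dsin2 t; rewrite h1 h2 expr0n /= addr0 => /eqP; rewrite eq_sym oner_eq0.
Qed.

Unset Implicit Arguments.
Theorem mainTheorem1 (R : realType) :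
  (forall (N : nat) (g : 'M[R[i]]_(dimV N false)),
     @in_normalizer _ N _ g ->
     exists (ps : seq (seq 'I_N * R[i])) (ms : seq (seq 'I_N))
            (h : 'M[R[i]]_(dimV N false)),
       admissible ps ms /\ @in_normalizer _ N _ h /\
       h *m g *m invmx h = normal_form false ps ms) /\
  (forall (N : nat) (g : 'M[R[i]]_(dimV N true)),
     @in_normalizer _ N _ g ->
     exists (eps : R[i]) (ps : seq (seq 'I_N * R[i])) (ms : seq (seq 'I_N))
            (h : 'M[R[i]]_(dimV N true)),
       (eps = 1 \/ eps = -1) /\ admissible ps ms /\ @in_normalizer _ N _ h /\
       h *m g *m invmx h = @eps_op _ N true eps * normal_form true ps ms).
Proof.
split.
- move=> N g hg; have [s [c [gE [hs hc]]]] := normalizer_mono hg.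
  have [ps [ms [h [[a1 a2 a3 a4] [hn he]]]]] := core_final hs hc (@zeta_nz R).
  exists ps, ms, h; split; first by split.
  split => //; rewrite gE he /normal_form.
  have -> : mono id (fun j : 'I_(dimV N false) => if (N + N <= j)%N then c j else 1) = 1%:M.
    rewrite -mono1; apply: mono_ext => // j; have := ltn_ord j.
    move: (nat_of_ord j) => m; rewrite /dimV addn0 => hm.
    by rewrite leqNgt hm.
  by rewrite mul1mx.
- move=> N g hg; have [s [c [gE [hs hc]]]] := normalizer_mono hg.
  have [ps [ms [h [[a1 a2 a3 a4] [hn he]]]]] := core_final hs hc (@zeta_nz R).
  have lt0 : (N + N < dimV N true)%N by rewrite /dimV addn1.
  pose e0 := Ordinal lt0.
  exists (c e0), ps, ms, h; split.
    have := hc e0; rewrite swp_e0 //= => /eqP; rewrite -expr2 sqrf_eq1.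
    by case/orP => /eqP ->; [left|right].
  split; first by split.
  split => //; rewrite gE he /normal_form eps_mono.
  congr (_ *m _); apply: mono_ext => // j; case: ifP => // hj.
  by congr c; apply: e0_uniq.
Qed.
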